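(* Let $S=\mathbb{C}[x_1,x_2,x_3,x_4]$. Then the ideal $I=\langle h_1,h_4\rangle$ is a prime ideal of $S$.
   Context: $h_a=\sum_{1\le i_1\le\cdots\le i_a\le 4}x_{i_1}\cdots x_{i_a}$ denotes the complete symmetric polynomial of degree $a$ in $x_1,\dots,x_4$. *)

(* Defs.v *)
(* C[x1,x2,x3,x4] is modelled as the iterated univariate
   polynomial ring R[x1][x2][x3][x4] = {poly {poly {poly {poly R}}}}. *)
From HB Require Import structures.
From mathcomp Require Import all_boot all_order all_algebra.
Set Implicit Arguments. Unset Strict Implicit. Unset Printing Implicit Defensive.
Import Order.TTheory GRing.Theory Num.Theory.
Local Open Scope ring_scope.

Definition poly4 (R : nzRingType) : Type := {poly {poly {poly {poly R}}}}.

(* The variables x_1, ..., x_4 (indexed by i : 'I_4, i = 0 is x_1). *)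
Definition var4 (R : nzRingType) (i : 'I_4) : {poly {poly {poly {poly R}}}} :=
  match val i with
  | 0 => ('X)%:P%:P%:P
  | 1 => ('X)%:P%:P
  | 2 => ('X)%:P
  | _ => 'X
  end.

(* Complete homogeneous symmetric polynomial of degree a in x_1..x_4:
   the sum of all monomials x^e with e : 'I_4 -> nat, |e| = a
   (each exponent is at most a, so e ranges over {ffun 'I_4 -> 'I_a.+1}). *)
Definition h4sym (R : comNzRingType) (a : nat) : {poly {poly {poly {poly R}}}} :=
  \sum_(e : {ffun 'I_4 -> 'I_a.+1} | (\sum_(i < 4) (e i : nat))%N == a)
     \prod_(i < 4) var4 R i ^+ e i.

Definition in_ideal2 (A : comNzRingType) (f g p : A) : Prop :=
  exists a b : A, p = a * f + b * g.

Definition prime_ideal (A : comNzRingType) (I : A -> Prop) : Prop :=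
  ~ I 1 /\ forall p q : A, I (p * q) -> I p \/ I q.

(* Main.v *)
Require Import Defs.
From HB Require Import structures.
From mathcomp Require Import all_boot all_order all_algebra.
From mathcomp Require Import ring zify.
Set Implicit Arguments. Unset Strict Implicit. Unset Printing Implicit Defensive.
Import Order.TTheory GRing.Theory Num.Theory.
Local Open Scope ring_scope.

(* Proof outline.
   1. h1 = X - s, where s = -(x1+x2+x3), and h4(x1,x2,x3,s) = e2^2 - e4 =: g,
      so <h1,h4> = { p | g divides p(x1,x2,x3,s) }.
   2. g is prime in C[x1][x2][x3]: g is monic in x3; specialising x1 := c for
      a suitable c <> 0 reduces this to primality of hc in C[x2][x3].
   3. hc is irreducible (no factorisations of degrees 1+3 or 2+2), hence prime
      by a Gauss-lemma argument through the fraction field of C[x2]. *)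


Section Frac.
Variable R : idomainType.
Local Open Scope quotient_scope.
Lemma frac_surj (x : {fraction R}) : exists n d : R, d != 0 /\ x = tofrac n / tofrac d.
Proof.
exists (\n_(repr x)), (\d_(repr x)); split; first exact: denom_ratioP.
have d0 := denom_ratioP (repr x).
rewrite -[x in LHS]reprK.
unlock tofrac.
rewrite /GRing.inv /= -FracField.pi_inv.
rewrite /GRing.mul /= -FracField.pi_mul.
apply/eqmodP; rewrite /= FracField.equivfE /FracField.mulf /FracField.invf.
rewrite !numden_Ratio ?oner_neq0 //= ?mulr1 ?mul1r //.
by rewrite mulrC.
Qed.

Lemma tofrac_inj : injective (@tofrac R).
Proof. by move=> x y /eqP; rewrite tofrac_eq => /eqP. Qed.

Lemma clear_den (P : {poly {fraction R}}) :
  exists d : R, d != 0 /\ exists P0 : {poly R},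
    (@tofrac R d)%:P * P = map_poly (@tofrac R) P0.
Proof.
elim/poly_ind: P => [|Q c [d [d0 [Q0 EQ]]]].
  by exists 1; split; [exact: oner_neq0 | exists 0; rewrite mulr0 rmorph0].
have [n [m [m0 ->]]] := frac_surj c.
exists (d * m); split; first by rewrite mulf_neq0.
exists (m%:P * Q0 * 'X + (d * n)%:P).
rewrite rmorphD rmorphM rmorphM /= map_polyX !map_polyC /= -EQ.
rewrite mulrDr; congr (_ + _).
  by rewrite rmorphM polyCM /= -!mulrA mulrCA.
rewrite -!polyCM; congr (_%:P); rewrite !rmorphM /=.
have hm : tofrac m != 0 by rewrite tofrac_eq0.
by rewrite [tofrac n / _]mulrC mulrA -(mulrA _ (tofrac m)) divff // mulr1.
Qed.
End Frac.

Section GaussLin.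
Variable C : closedFieldType.

Lemma dvd_const (d p : {poly C}) : size d = 1%N -> d %| p.
Proof.
move=> /eqP /size_poly1P [c c0 ->]; apply/dvdpP; exists (c^-1 *: p).
by rewrite mulrC mul_polyC scalerA divff // scale1r.
Qed.

Lemma GL n (d : {poly C}) (U W : {poly {poly C}}) :
  (size d <= n)%N -> d != 0 -> (forall i, d %| (U * W)`_i) ->
  exists d1 d2, d = d1 * d2 /\ (forall i, d1 %| U`_i) /\ (forall i, d2 %| W`_i).
Proof.
elim: n d U W => [|n IH] d U W.
  by rewrite leqn0 size_poly_eq0 => /eqP ->; rewrite eqxx.
move=> sd d0 hd.
have [s1|s1] := eqVneq (size d) 1%N.
  exists d, 1; split; first by rewrite mulr1.
  split=> i; first exact: dvd_const.
  by apply: dvd_const; rewrite size_poly1.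
have [a ra] := closed_rootP _ s1.
have [d' Dd] := factor_theorem _ _ ra.
have Xa0 : ('X - a%:P : {poly C}) != 0 by rewrite polyXsubC_eq0.
have d'0 : d' != 0 by apply: contraNneq d0 => e; rewrite Dd e mul0r.
have sd' : (size d' <= n)%N.
  move: sd; rewrite Dd size_mul // size_XsubC addn2 /=.
  by [].
pose ev := map_poly (horner_eval a).
have evUW : ev U * ev W = 0.
  rewrite -rmorphM; apply/polyP => i; rewrite coef_map coef0 /= horner_evalE.
  apply/rootP; rewrite -dvdp_XsubCl; apply: dvdp_trans (hd i).
  by rewrite Dd dvdp_mull.
have divall (V : {poly {poly C}}) : ev V = 0 ->
    V = map_poly (fun q => q %/ ('X - a%:P)) V * ('X - a%:P)%:P.
  move=> eV; apply/polyP => i; rewrite coefMC.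
  rewrite coef_map_id0 ?div0p //= divpK //.
  by rewrite dvdp_XsubCl; apply/rootP; move/polyP: eV => /(_ i); rewrite coef_map coef0.
move/eqP: evUW; rewrite mulf_eq0 => /orP [/eqP eU | /eqP eW].
- set U' := map_poly (fun q => q %/ ('X - a%:P)) U.
  have hd' : forall i, d' %| (U' * W)`_i.
    move=> i; have := hd i; rewrite [U in (U * W)]divall // -mulrA
      [(_ %:P * W)]mulrC mulrA coefMC Dd.
    by rewrite dvdp_mul2r.
  have [d1 [d2 [E1 [H1 H2]]]] := IH d' U' W sd' d'0 hd'.
  exists (d1 * ('X - a%:P)), d2; split; first by rewrite Dd E1 mulrAC.
  split=> // i; rewrite [U]divall // coefMC dvdp_mul2r //.
- set W' := map_poly (fun q => q %/ ('X - a%:P)) W.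
  have hd' : forall i, d' %| (U * W')`_i.
    move=> i; have := hd i; rewrite [W in (U * W)]divall // mulrA coefMC Dd.
    by rewrite dvdp_mul2r.
  have [d1 [d2 [E1 [H1 H2]]]] := IH d' U W' sd' d'0 hd'.
  exists d1, (d2 * ('X - a%:P)); split; first by rewrite Dd E1 mulrA.
  split=> // i; rewrite [W]divall // coefMC dvdp_mul2r //.
Qed.
End GaussLin.

Section Transfer.
Variable C : closedFieldType.
Local Notation A := {poly C}.
Local Notation F := {fraction A}.
Local Notation tf := (@tofrac A).

Lemma prime_of_irr (h : {poly A}) : h \is monic ->
  (forall U W : {poly A}, h = U * W -> size U = 1%N \/ size W = 1%N) ->
  forall a b : {poly A}, (exists m, a * b = m * h) ->
  (exists m, a = m * h) \/ (exists m, b = m * h).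
Proof.
move=> mh irr a b [m Eab].
pose H := map_poly tf h.
have h0 : h != 0 by apply: monic_neq0.
have tfi : injective tf by exact: tofrac_inj.
have H0 : H != 0 by rewrite -size_poly_eq0 /H size_map_inj_poly // size_poly_eq0.
have irrH : forall D E : {poly F}, H = D * E -> size D = 1%N \/ size E = 1%N.
  move=> D E EH.
  have [dD [dD0 [D0 ED]]] := clear_den D.
  have [dE [dE0 [E0 EE]]] := clear_den E.
  have EDE : D0 * E0 = (dD * dE)%:P * h.
    apply: (map_inj_poly tfi (rmorph0 _)).
    rewrite (rmorphM (map_poly tf)) (rmorphM (map_poly tf)).
    change (map_poly tf D0 * map_poly tf E0 = map_poly tf (dD * dE)%:P * H).
    by rewrite -ED -EE map_polyC /= rmorphM polyCM EH mulrACA.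
  have dd0 : dD * dE != 0 by rewrite mulf_neq0.
  have hdv : forall i, (dD * dE) %| (D0 * E0)`_i.
    by move=> i; rewrite EDE coefCM; exact: dvdp_mulIl.
  have [d1 [d2 [Ed [H1 H2]]]] := @GL _ (size (dD * dE)) (dD * dE) D0 E0 (leqnn _) dd0 hdv.
  have d10 : d1 != 0 by apply: contraNneq dd0 => e; rewrite Ed e mul0r.
  have d20 : d2 != 0 by apply: contraNneq dd0 => e; rewrite Ed e mulr0.
  pose U := map_poly (fun q => q %/ d1) D0.
  pose W := map_poly (fun q => q %/ d2) E0.
  have EU : D0 = d1%:P * U.
    apply/polyP => i; rewrite coefCM coef_map_id0 ?div0p //= divpKC //.
  have EW : E0 = d2%:P * W.
    apply/polyP => i; rewrite coefCM coef_map_id0 ?div0p //= divpKC //.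
  have hUW : h = U * W.
    apply: (@mulfI _ (d1 * d2)%:P); first by rewrite polyC_eq0 -Ed.
    by rewrite -Ed -EDE EU EW Ed polyCM mulrACA.
  have sD : size D = size U.
    have : size ((tf dD)%:P * D) = size D0 by rewrite ED size_map_inj_poly //; exact: tofrac_inj.
    by rewrite size_Cmul ?tofrac_eq0 // EU size_Cmul.
  have sE : size E = size W.
    have : size ((tf dE)%:P * E) = size E0 by rewrite EE size_map_inj_poly //; exact: tofrac_inj.
    by rewrite size_Cmul ?tofrac_eq0 // EW size_Cmul.
  by rewrite sD sE; apply: irr.
have back : forall x : {poly A}, H %| map_poly tf x -> exists m, x = m * h.
  move=> x Hx.
  have Ex := Pdiv.RingMonic.rdivp_eq mh x.
  set q := Pdiv.CommonRing.rdivp x h in Ex.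
  set r := Pdiv.CommonRing.rmodp x h in Ex.
  have sr : (size r < size h)%N by apply: Pdiv.CommonRing.ltn_rmodpN0.
  have Hr : H %| map_poly tf r.
    have -> : map_poly tf r = map_poly tf x - map_poly tf q * H.
      rewrite {1}Ex rmorphD rmorphM /=.
      change (map_poly tf r = map_poly tf q * H + map_poly tf r - map_poly tf q * H).
      by rewrite addrAC subrr add0r.
    by rewrite dvdp_sub // dvdp_mull.
  have r0 : r = 0.
    apply: (map_inj_poly tfi (rmorph0 tf)); rewrite rmorph0.
    apply/eqP/negPn/negP => nr.
    have := dvdp_leq nr Hr; rewrite size_map_inj_poly //.
    by rewrite /H size_map_inj_poly // leqNgt sr.
  by exists q; rewrite {1}Ex r0 addr0.
have HAB : H %| map_poly tf a * map_poly tf b.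
  by rewrite -rmorphM /= Eab rmorphM dvdp_mull.
pose G := gcdp H (map_poly tf a).
have GH : G %| H by apply: dvdp_gcdl.
have := irrH (H %/ G) G; rewrite divpK //; move=> /(_ erefl) [sq|sG].
- left; apply: back.
  have [c c0 Eq] := size_poly1P _ (introT eqP sq).
  have eGH : G %= H.
    rewrite -dvdp_size_eqp //; apply/eqP.
    by rewrite -(divpK GH) Eq size_Cmul.
  by rewrite -(eqp_dvdl _ eGH); apply: dvdp_gcdr.
- right; apply: back.
  have cop : coprimep H (map_poly tf a) by rewrite coprimep_def sG.
  by rewrite -(Gauss_dvdpl _ cop) mulrC.
Qed.
End Transfer.


Section Quart.
Variable R : nzRingType.
Definition quart (c0 c1 c2 c3 c4 : R) : {poly R} :=
  c0%:P + c1%:P * 'X + c2%:P * 'X^2 + c3%:P * 'X^3 + c4%:P * 'X^4.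

Lemma coef_quart c0 c1 c2 c3 c4 i :
  (quart c0 c1 c2 c3 c4)`_i = nth 0 [:: c0; c1; c2; c3; c4] i.
Proof.
rewrite /quart !coefD !coefCM coefC coefX !coefXn.
by case: i => [|[|[|[|[|i]]]]]; rewrite /= ?mulr0 ?mulr1 ?addr0 ?add0r ?nth_nil.
Qed.

Lemma quart_inj a0 a1 a2 a3 a4 b0 b1 b2 b3 b4 :
  quart a0 a1 a2 a3 a4 = quart b0 b1 b2 b3 b4 ->
  [/\ a0 = b0, a1 = b1, a2 = b2, a3 = b3 & a4 = b4].
Proof.
move=> E; have C i := congr1 (fun p : {poly R} => p`_i) E.
move: (C 0%N) (C 1%N) (C 2%N) (C 3%N) (C 4%N); rewrite /= !coef_quart /=.
by move=> -> -> -> -> ->.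
Qed.

Lemma quartE (p : {poly R}) : (size p <= 5)%N ->
  p = quart p`_0 p`_1 p`_2 p`_3 p`_4.
Proof.
move=> /leq_sizeP sp; apply/polyP => i; rewrite coef_quart.
by case: i => [|[|[|[|[|i]]]]] //=; rewrite nth_nil sp.
Qed.

Lemma size_quart c0 c1 c2 c3 c4 : c4 != 0 -> size (quart c0 c1 c2 c3 c4) = 5%N.
Proof.
move=> c40; apply/anti_leq/andP; split.
  by apply/leq_sizeP => j hj; rewrite coef_quart nth_default.
rewrite ltnNge; apply/negP => /leq_sizeP /(_ 4%N (leqnn _)).
by rewrite coef_quart /=; apply/eqP.
Qed.

Lemma lead_quart c0 c1 c2 c3 c4 : c4 != 0 -> lead_coef (quart c0 c1 c2 c3 c4) = c4.
Proof. by move=> c40; rewrite lead_coefE size_quart // coef_quart. Qed.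
End Quart.

Lemma map_quart (R S : nzRingType) (f : {rmorphism R -> S}) c0 c1 c2 c3 c4 :
  map_poly f (quart c0 c1 c2 c3 c4) = quart (f c0) (f c1) (f c2) (f c3) (f c4).
Proof.
apply/polyP => i; rewrite coef_map !coef_quart.
by case: i => [|[|[|[|[|i]]]]] //=; rewrite !nth_nil rmorph0.
Qed.


Lemma horner_quart (R : comNzRingType) (c0 c1 c2 c3 c4 x : R) :
  (quart c0 c1 c2 c3 c4).[x] = c0 + c1 * x + c2 * x ^+ 2 + c3 * x ^+ 3 + c4 * x ^+ 4.
Proof. by rewrite /quart !hornerE. Qed.


Section HC.
Variable C : numClosedFieldType.
Variable c : C.
Hypothesis c0 : c != 0.

Definition UU : {poly C} := c%:P + 'X.
Definition PP : {poly C} := c%:P * 'X.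
Definition a3 := UU + UU.
Definition a2 := UU ^+ 2 + UU ^+ 2 + UU ^+ 2 - PP.
Definition a1 := UU * (UU ^+ 2 + UU ^+ 2 - PP).
Definition a0 := (UU ^+ 2 - PP) ^+ 2.
Definition hc : {poly {poly C}} := quart a0 a1 a2 a3 1.

Lemma hc_size : size hc = 5%N. Proof. exact: size_quart (oner_neq0 _). Qed.
Lemma hc_monic : hc \is monic.
Proof. by rewrite monicE lead_quart ?oner_neq0. Qed.

Lemma monic_size2 (u : {poly {poly C}}) : u \is monic -> size u = 2%N ->
  u = 'X + (u`_0)%:P.
Proof.
move=> mu su; apply/polyP => i; rewrite coefD coefX coefC.
case: i => [|[|i]] /=; rewrite ?add0r ?addr0 //.
  by move: mu; rewrite monicE lead_coefE su => /eqP.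
by rewrite nth_default // su.
Qed.


Lemma lin_case (u w : {poly {poly C}}) : u \is monic -> size u = 2%N ->
  u * w = hc -> False.
Proof.
move=> mu su E.
have Eu := monic_size2 mu su.
set r := u`_0 in Eu.
pose rho := - r.[0].
pose f := horner_eval (0 : C).
pose pi0 := map_poly f.
pose Q : {poly C} := 'X^2 + c%:P * 'X + (c^+2)%:P.
have pih : pi0 hc = Q ^+ 2.
  have e0 : UU.[0] = c by rewrite /UU !hornerE ?addr0.
  have p0 : PP.[0] = 0 by rewrite /PP !hornerE ?mulr0.
  rewrite /pi0 /hc map_quart /f /= /horner_eval.
  rewrite /a0 /a1 /a2 /a3 !(e0, p0, hornerD, hornerN, hornerM, horner_exp, hornerC).
  have -> : Q ^+ 2 = quart (c ^+ 4) (c ^+ 3 *+ 2) (c ^+ 2 *+ 3) (c *+ 2) 1.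
    rewrite /Q /quart !rmorphMn !rmorphXn /=; ring.
  by congr quart; ring.
have pi0M : forall p q, pi0 (p * q) = pi0 p * pi0 q.
  by move=> p q; rewrite /pi0 /f rmorphM.
have piu : pi0 u = 'X - rho%:P.
  by rewrite Eu /pi0 /f map_polyXaddC /horner_eval /rho polyCN opprK.
have hQ : Q.[rho] = 0.
  have := congr1 (fun p => p.[rho]) (congr1 pi0 E).
  rewrite /= pi0M pih piu hornerM hornerXsubC subrr mul0r horner_exp.
  by move/esym/eqP; rewrite expf_eq0 /= => /eqP.
have /factor_theorem [Q1 EQ] : root Q rho by apply/rootP.
have Xr0 : ('X - rho%:P : {poly C}) != 0 by rewrite polyXsubC_eq0.
have hw : (pi0 w).[rho] = 0.
  have : ('X - rho%:P) * pi0 w = ('X - rho%:P) * (Q1 ^+ 2 * ('X - rho%:P)).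
    have -> : ('X - rho%:P) * pi0 w = pi0 (u * w) by rewrite pi0M piu.
    by rewrite E pih EQ; ring.
  by move/(mulfI Xr0) => ->; rewrite hornerM hornerXsubC subrr mulr0.
have ev (p : {poly {poly C}}) : (p.[rho%:P]).[0] = (pi0 p).[rho].
  have := horner_map f p rho%:P.
  by rewrite /= /horner_eval hornerC => <-.
have [q1 Eq1] : exists q1, u.[rho%:P] = q1 * 'X.
  have : root (u.[rho%:P]) 0 by apply/rootP; rewrite ev piu hornerXsubC subrr.
  by move/factor_theorem => [q1 Eq1]; exists q1; rewrite Eq1 subr0.
have [q2 Eq2] : exists q2, w.[rho%:P] = q2 * 'X.
  have : root (w.[rho%:P]) 0 by apply/rootP; rewrite ev hw.
  by move/factor_theorem => [q2 Eq2]; exists q2; rewrite Eq2 subr0.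
have key : (hc.[rho%:P])`_1 = 0.
  rewrite -E hornerM Eq1 Eq2.
  have -> : q1 * 'X * (q2 * 'X) = 'X^2 * (q1 * q2) by ring.
  by rewrite coefXnM.
have val : hc.[rho%:P] = quart ((rho^+2 + c*rho + c^+2)^+2)
    (rho^+3 *+ 2 + c*rho^+2 *+ 5 + c^+2*rho *+ 5 + c^+3 *+ 2)
    (rho^+2 *+ 3 + c*rho *+ 5 + c^+2 *+ 3) (rho *+ 2 + c *+ 2) 1.
  rewrite /hc horner_quart /a0 /a1 /a2 /a3 /UU /PP /quart.
  rewrite !(polyCD, polyCM, polyC_exp, polyCMn, polyCN, polyC1).
  ring.
move: key; rewrite val coef_quart /= => key.
have hQ' : rho^+2 + c * rho + c^+2 = 0.
  by move: hQ; rewrite /Q !hornerE.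
have e3 : c ^+ 3 = (rho *+ 2 + c *+ 3) * (rho^+2 + c * rho + c^+2)
    - (rho^+3 *+ 2 + c*rho^+2 *+ 5 + c^+2*rho *+ 5 + c^+3 *+ 2) by ring.
move: e3; rewrite hQ' key mulr0 subrr => /eqP; rewrite expf_eq0 /=.
by apply/negP.
Qed.


Lemma two_neq0 : (2%:R : {poly C}) != 0.
Proof. by rewrite -polyC_natr polyC_eq0 pnatr_eq0. Qed.

Definition ZZ := PP * (UU ^+ 2 *+ 4 - PP *+ 3).

Lemma ns_Z (s : {poly C}) : s ^+ 2 = ZZ -> False.
Proof.
move=> E.
have EZ : ZZ = quart 0 (c ^+ 3 *+ 4) (c ^+ 2 *+ 5) (c *+ 4) 0.
  rewrite /ZZ /UU /PP /quart !(polyCD, polyCM, polyC_exp, polyCMn, polyCN, polyC1, polyC0).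
  ring.
have s0 : s.[0] = 0.
  have := congr1 (fun p => p.[0]) E; rewrite /= horner_exp EZ horner_quart.
  rewrite !expr0n /= ?mulr0 ?mul0r ?addr0 => /eqP; rewrite expf_eq0 => /andP [_ /eqP] //.
have /factor_theorem [s1 Es] : root s 0 by apply/rootP.
have := congr1 (fun p : {poly C} => p`_1) E; rewrite /= EZ coef_quart /= Es subr0.
have -> : (s1 * 'X) ^+ 2 = 'X^2 * s1 ^+ 2 by ring.
rewrite coefXnM /= => /esym /eqP.
by rewrite -mulr_natr mulf_eq0 pnatr_eq0 orbF expf_eq0 /= (negbTE c0).
Qed.

Definition DD := (UU ^+ 2 *+ 3 - PP *+ 2) ^+ 2 - PP * (UU ^+ 2 *+ 4 - PP *+ 3) *+ 4.

Lemma ns_D (S : {poly C}) : S ^+ 2 = DD -> False.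
Proof.
move=> E.
have EK : DD = quart (c ^+ 4 *+ 9) (c ^+ 3 *+ 8) (c ^+ 2 *+ 14) (c *+ 8) 9.
  rewrite /DD /UU /PP /quart !(polyCD, polyCM, polyC_exp, polyCMn, polyCN, polyC1, polyC0).
  rewrite ?polyC_natr.
  ring.
have n9 : (9 : C) != 0 by rewrite pnatr_eq0.
have sK : size DD = 5%N by rewrite EK size_quart.
have S0 : S != 0 by apply/eqP => S0; move: sK; rewrite -E S0 expr0n /= size_poly0.
have sS : size S = 3%N.
  have := size_exp S 2; rewrite E sK /= => h.
  have : size S != 0%N by rewrite size_poly_eq0.
  move: h; case: (size S) => // n; rewrite /= => h _; lia.
have ES : S = quart S`_0 S`_1 S`_2 0 0.
  have h5 : (size S <= 5)%N by rewrite sS.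
  by rewrite {1}(quartE h5); congr quart; apply: nth_default; rewrite sS.
set s0 := S`_0 in ES; set s1 := S`_1 in ES; set s2 := S`_2 in ES.
have : quart (s0 ^+ 2) (s0 * s1 *+ 2) (s1 ^+ 2 + s0 * s2 *+ 2) (s1 * s2 *+ 2) (s2 ^+ 2) =
       quart (c ^+ 4 *+ 9) (c ^+ 3 *+ 8) (c ^+ 2 *+ 14) (c *+ 8) 9.
  rewrite -EK -E ES /quart.
  rewrite !(polyCD, polyCM, polyC_exp, polyCMn, polyCN, polyC1, polyC0).
  ring.
case/quart_inj => E0 E1 E2 E3 E4.
have h : (c *+ 8) * (c ^+ 2 * s2 - s0) = 0.
  have -> : (c *+ 8) * (c ^+ 2 * s2 - s0) = (c ^+ 3 *+ 8) * s2 - (c *+ 8) * s0 by ring.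
  rewrite -E1 -E3; ring.
have c8 : c *+ 8 != 0 by rewrite -mulr_natr mulf_eq0 pnatr_eq0 /= (negbTE c0).
move: h => /eqP; rewrite mulf_eq0 (negbTE c8) /= subr_eq0 => /eqP Es0.
have h2 : (s1 * s2 *+ 2) ^+ 2 + c ^+ 2 *+ 8 * (s2 ^+ 2) ^+ 2
          - s2 ^+ 2 *+ 4 * (s1 ^+ 2 + s0 * s2 *+ 2) = 0.
  by rewrite -Es0; ring.
move: h2; rewrite E3 E4 E2.
have -> : (c *+ 8) ^+ 2 + c ^+ 2 *+ 8 * 9 ^+ 2 - 9 *+ 4 * (c ^+ 2 *+ 14)
   = c ^+ 2 * 208 by ring.
move/eqP; rewrite mulf_eq0 pnatr_eq0 orbF expf_eq0 /=.
by apply/negP.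
Qed.


Lemma monic_size3 (u : {poly {poly C}}) : u \is monic -> size u = 3%N ->
  u = quart u`_0 u`_1 1 0 0.
Proof.
move=> mu su; have h5 : (size u <= 5)%N by rewrite su.
rewrite {1}(quartE h5); congr quart; last 2 first.
- by apply: nth_default; rewrite su.
- by apply: nth_default; rewrite su.
by move: mu; rewrite monicE lead_coefE su => /eqP.
Qed.

Lemma quad_case (u w : {poly {poly C}}) : u \is monic -> size u = 3%N ->
  w \is monic -> size w = 3%N -> u * w = hc -> False.
Proof.
move=> mu su mw sw E.
have Eu := monic_size3 mu su; have Ew := monic_size3 mw sw.
set be := u`_0 in Eu; set al := u`_1 in Eu.
set de := w`_0 in Ew; set ga := w`_1 in Ew.
have : quart (be * de) (al * de + be * ga) (be + de + al * ga) (al + ga) 1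
     = quart a0 a1 a2 a3 1.
  rewrite -[RHS]/hc -E Eu Ew /quart.
  rewrite !(polyCD, polyCM, polyC_exp, polyCMn, polyCN, polyC1, polyC0).
  ring.
case/quart_inj => E0 E1 E2 E3 _.
have Eg : ga = a3 - al by rewrite -E3 [al + ga]addrC addrK.
have key : (al - ga) * ((de - be) *+ 4 + UU * (al - ga) *+ 2)
    = (al * de + be * ga - a1) *+ 8 - UU * (be + de + al * ga - a2) *+ 8.
  by rewrite Eg /a1 /a2 /a3; ring.
rewrite E1 E2 !subrr mulr0 mul0rn subrr in key.
move/eqP: key; rewrite mulf_eq0 => /orP [/eqP he | /eqP hX].
- move/eqP: he; rewrite subr_eq0 => /eqP he.
  have hal : al = UU.
    have : (al - UU) * 2%:R = 0.
      have -> : (al - UU) * 2%:R = al + ga - a3 by rewrite -he /a3; ring.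
      by rewrite E3 subrr.
    by move/eqP; rewrite mulf_eq0 (negbTE two_neq0) orbF subr_eq0 => /eqP.
  apply: (@ns_Z (be - de)).
  have -> : (be - de) ^+ 2 = (be + de + al * ga - al * ga) ^+ 2 - (be * de) *+ 4 by ring.
  rewrite E2 E0 -he hal /ZZ /a2 /a0; ring.
- have T1 : be + de = a2 - al * ga by rewrite -E2 addrK.
  have T2 : (de - be) *+ 4 = - (UU * (al - ga) *+ 2).
    by apply/eqP; rewrite -addr_eq0 hX.
  have H64 : ((a2 - al * ga) *+ 4) ^+ 2 - (UU * (al - ga) *+ 2) ^+ 2 = a0 *+ 64.
    have I : ((be + de) *+ 4) ^+ 2 - ((de - be) *+ 4) ^+ 2 = (be * de) *+ 64 by ring.
    by rewrite T1 T2 sqrrN E0 in I.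
  set S0 := (al - ga) ^+ 2 *+ 2 + UU ^+ 2 *+ 12 - PP *+ 8.
  have I2 : S0 ^+ 2 = DD *+ 16 +
     (((a2 - al * ga) *+ 4) ^+ 2 - (UU * (al - ga) *+ 2) ^+ 2 - a0 *+ 64) *+ 4.
    by rewrite /S0 Eg /DD /a0 /a2 /a3; ring.
  rewrite H64 subrr mul0rn addr0 in I2.
  apply: (@ns_D (S0 * ((4 : C)^-1)%:P)).
  rewrite exprMn I2 -polyC_exp -mulr_natr -mulrA -polyC_natr -polyCM.
  have -> : (16%:R * (4 : C)^-1 ^+ 2) = 1.
    have n4 : (4 : C) != 0 by rewrite pnatr_eq0.
    by field; rewrite ?pnatr_eq0.
  by rewrite mulr1.
Qed.


Lemma hc_irr (U W : {poly {poly C}}) : hc = U * W -> size U = 1%N \/ size W = 1%N.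
Proof.
move=> E.
have hc0 : hc != 0 by rewrite -size_poly_eq0 hc_size.
have U0 : U != 0 by apply: contraNneq hc0 => e; rewrite E e mul0r.
have W0 : W != 0 by apply: contraNneq hc0 => e; rewrite E e mulr0.
have sUW : (size U + size W)%N = 6%N.
  by have := hc_size; rewrite E size_mul //; case: (_ + _)%N => // k /= ->.
have lUW : lead_coef U * lead_coef W = 1.
  by rewrite -lead_coefM -E; apply/eqP; rewrite -monicE hc_monic.
have lU0 : lead_coef U != 0 by rewrite lead_coef_eq0.
have lW0 : lead_coef W != 0 by rewrite lead_coef_eq0.
pose u := lead_coef W *: U; pose w := lead_coef U *: W.
have mu : u \is monic by rewrite monicE lead_coefZ mulrC lUW.
have mw : w \is monic by rewrite monicE lead_coefZ lUW.
have su : size u = size U by rewrite size_scale.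
have sw : size w = size W by rewrite size_scale.
have Euw : u * w = hc by rewrite -scalerAr -scalerAl scalerA lUW scale1r E.
have Ewu : w * u = hc by rewrite mulrC.
have nU : size U != 0%N by rewrite size_poly_eq0.
have nW : size W != 0%N by rewrite size_poly_eq0.
have : (size U = 1%N \/ size W = 1%N) \/ ((size U = 2%N /\ size W = 4%N) \/
   (size U = 3%N /\ size W = 3%N) \/ (size U = 4%N /\ size W = 2%N)) by lia.
case=> [//|[[eU eW]|[[eU eW]|[eU eW]]]]; exfalso.
- by apply: (lin_case mu _ Euw); rewrite su eU.
- by apply: (quad_case mu _ mw _ Euw); rewrite ?su ?sw ?eU ?eW.
- by apply: (lin_case mw _ Ewu); rewrite sw eW.
Qed.

End HC.


Definition Gs (R : comNzRingType) (n : nat) (w : R) : {poly R} :=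
  \sum_(j < n) (w ^+ j)%:P * 'X^j.

Lemma hsym_gen (R : comNzRingType) (a : nat) (v : 'I_4 -> R) :
  \sum_(e : {ffun 'I_4 -> 'I_a.+1} | (\sum_(i < 4) (e i : nat))%N == a)
     \prod_(i < 4) v i ^+ e i
  = (\prod_(i < 4) Gs a.+1 (v i))`_a.
Proof.
rewrite /Gs bigA_distr_bigA coef_sum big_mkcond /=; apply: eq_bigr => f _.
rewrite big_split /= -rmorph_prod prodrXr coefCM coefXn.
by rewrite eq_sym; case: eqP => _; rewrite ?mulr1 ?mulr0.
Qed.

Section H4.
Variable R : comNzRingType.
Definition Gsum (w : R) : {poly R} := Gs 5 w.

Lemma geo (w : R) : (1 - w%:P * 'X) * Gsum w = 1 - (w ^+ 5)%:P * 'X^5.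
Proof.
rewrite /Gsum /Gs !big_ord_recr big_ord0 /= !polyC_exp.
ring.
Qed.

Lemma coef_h4 (w0 w1 w2 w3 : R) : w0 + w1 + w2 + w3 = 0 ->
  (Gsum w0 * Gsum w1 * Gsum w2 * Gsum w3)`_4 =
  (w0*w1 + w0*w2 + w0*w3 + w1*w2 + w1*w3 + w2*w3) ^+ 2 - w0*w1*w2*w3.
Proof.
move=> hw.
set G := Gsum w0 * Gsum w1 * Gsum w2 * Gsum w3.
set e2 := w0*w1 + w0*w2 + w0*w3 + w1*w2 + w1*w3 + w2*w3.
set e3 := w0*w1*w2 + w0*w1*w3 + w0*w2*w3 + w1*w2*w3.
set e4 := w0*w1*w2*w3.
set E := (1 - w0%:P * 'X) * (1 - w1%:P * 'X) * (1 - w2%:P * 'X) * (1 - w3%:P * 'X).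
have EG : E * G = 1 + 'X^5 * (- ((w0^+5)%:P + (w1^+5)%:P + (w2^+5)%:P + (w3^+5)%:P)
   + 'X^5 * ((w0^+5)%:P * (w1^+5)%:P + (w0^+5)%:P * (w2^+5)%:P + (w0^+5)%:P * (w3^+5)%:P
      + (w1^+5)%:P * (w2^+5)%:P + (w1^+5)%:P * (w3^+5)%:P + (w2^+5)%:P * (w3^+5)%:P)
   - 'X^10 * ((w0^+5)%:P * (w1^+5)%:P * (w2^+5)%:P + (w0^+5)%:P * (w1^+5)%:P * (w3^+5)%:P
      + (w0^+5)%:P * (w2^+5)%:P * (w3^+5)%:P + (w1^+5)%:P * (w2^+5)%:P * (w3^+5)%:P)
   + 'X^15 * ((w0^+5)%:P * (w1^+5)%:P * (w2^+5)%:P * (w3^+5)%:P)).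
  have -> : E * G = ((1 - w0%:P * 'X) * Gsum w0) * ((1 - w1%:P * 'X) * Gsum w1)
      * ((1 - w2%:P * 'X) * Gsum w2) * ((1 - w3%:P * 'X) * Gsum w3) by rewrite /E /G; ring.
  rewrite !geo; ring.
have EE : E = 1 + e2%:P * 'X^2 - e3%:P * 'X^3 + e4%:P * 'X^4.
  rewrite /E /e2 /e3 /e4 !(polyCD, polyCM, polyCN).
  have : w0%:P + w1%:P + w2%:P + w3%:P = 0 by rewrite -!polyCD hw.
  move=> h; apply/eqP; rewrite -subr_eq0; apply/eqP.
  have -> : w3%:P = - (w0%:P + w1%:P + w2%:P) by apply/eqP; rewrite -addr_eq0 addrC h.
  ring.
have EG2 : E * G = G + e2%:P * ('X^2 * G) - e3%:P * ('X^3 * G) + e4%:P * ('X^4 * G).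
  by rewrite EE; ring.
have C k := congr1 (fun p : {poly R} => p`_k) (etrans (esym EG2) EG).
move: (C 0%N) (C 1%N) (C 2%N) (C 3%N) (C 4%N).
rewrite /= !(coefD, coefB, coefN, coefCM, coefXnM, coef1) /= !subnn !mulr0 !addr0
  ?oppr0 ?addr0.
move=> h0 h1 h2 h3 h4.
have g2 : G`_2 = - e2 by move: h2; rewrite h0 mulr1 => /eqP; rewrite addr_eq0 => /eqP.
have e42 : (4 - 2 = 2)%N by []. have e43 : (4 - 3 = 1)%N by [].
move: h4; rewrite e42 e43 g2 h1 h0 => h4.
have -> : G`_4 = G`_4 + e2 * - e2 - e3 * 0 + e4 * 1 - (e4 - e2 ^+ 2) by ring.
by rewrite h4; ring.
Qed.
End H4.

Section H1.
Variable R : comNzRingType.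
Definition Gsum1 (w : R) : {poly R} := Gs 2 w.
Lemma coef_h1 (w0 w1 w2 w3 : R) :
  (Gsum1 w0 * Gsum1 w1 * Gsum1 w2 * Gsum1 w3)`_1 = w0 + w1 + w2 + w3.
Proof.
have E w : Gsum1 w = 1 + w%:P * 'X.
  by rewrite /Gsum1 /Gs !big_ord_recr big_ord0 /= expr0 expr1 polyC1 add0r mul1r.
rewrite !E.
have -> : (1 + w0%:P * 'X) * (1 + w1%:P * 'X) * (1 + w2%:P * 'X) * (1 + w3%:P * 'X)
  = 1 + (w0 + w1 + w2 + w3)%:P * 'X + 'X^2 * ((w0*w1 + w0*w2 + w0*w3 + w1*w2 + w1*w3 + w2*w3)%:P
     + 'X * ((w0*w1*w2 + w0*w1*w3 + w0*w2*w3 + w1*w2*w3)%:P + 'X * (w0*w1*w2*w3)%:P)).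
  rewrite !(polyCD, polyCM); ring.
by rewrite !coefD coefCM coefXnM coef1 coefX /= mulr1 add0r addr0.
Qed.
End H1.


Section Main.
Variable C : numClosedFieldType.
Local Notation A1 := {poly C}.
Local Notation A2 := {poly A1}.
Local Notation B := {poly A2}.

Definition x1 : B := ('X : A1)%:P%:P.
Definition x2 : B := ('X : A2)%:P.
Definition x3 : B := 'X.
Definition ss : B := - (x1 + x2 + x3).
Definition gg : B := (x1*x2 + x1*x3 + x1*ss + x2*x3 + x2*ss + x3*ss) ^+ 2 - x1*x2*x3*ss.

Lemma h1E : h4sym C 1 = 'X - ss%:P.
Proof.
rewrite /h4sym hsym_gen !big_ord_recl big_ord0 mulr1 /=.
rewrite !mulrA.
rewrite (coef_h1 (var4 C ord0)).
rewrite /var4 /= /ss /x1 /x2 /x3 !polyCN !polyCD opprK.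
ring.
Qed.

Lemma h4E : (h4sym C 4).[ss] = gg.
Proof.
rewrite /h4sym horner_sum.
have he (e : {ffun 'I_4 -> 'I_5}) :
    (\prod_(i < 4) var4 C i ^+ e i).[ss] = \prod_(i < 4) (var4 C i).[ss] ^+ e i.
  by rewrite horner_prod; apply: eq_bigr => i _; rewrite horner_exp.
under eq_bigr => e _ do rewrite he.
rewrite (hsym_gen 4 (fun i => (var4 C i).[ss])).
rewrite !big_ord_recl big_ord0 mulr1 !mulrA /=.
rewrite (coef_h4 (w0 := (var4 C ord0).[ss])).
  by rewrite /var4 /= !hornerC hornerX.
by rewrite /var4 /= !hornerC hornerX /ss /x1 /x2 /x3 subrr.
Qed.

Definition u2 : A2 := ('X : A1)%:P + 'X.
Definition p2 : A2 := ('X : A1)%:P * 'X.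
Definition b3 := u2 + u2.
Definition b2 := u2 ^+ 2 + u2 ^+ 2 + u2 ^+ 2 - p2.
Definition b1 := u2 * (u2 ^+ 2 + u2 ^+ 2 - p2).
Definition b0 := (u2 ^+ 2 - p2) ^+ 2.

Lemma gg_quart : gg = quart b0 b1 b2 b3 1.
Proof.
rewrite /gg /ss /x1 /x2 /x3 /quart /b0 /b1 /b2 /b3 /u2 /p2.
rewrite !(polyCD, polyCM, polyC_exp, polyCN, polyC1, polyCB).
ring.
Qed.

Lemma morph_bs (R S : comNzRingType) (f : {rmorphism R -> S}) (u p : R) :
  [/\ f ((u ^+ 2 - p) ^+ 2) = ((f u) ^+ 2 - f p) ^+ 2,
      f (u * (u ^+ 2 + u ^+ 2 - p)) = f u * ((f u) ^+ 2 + (f u) ^+ 2 - f p),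
      f (u ^+ 2 + u ^+ 2 + u ^+ 2 - p) = (f u) ^+ 2 + (f u) ^+ 2 + (f u) ^+ 2 - f p
    & f (u + u) = f u + f u].
Proof. by rewrite !(rmorphXn, rmorphB, rmorphD, rmorphM). Qed.

Lemma psi_g (c : C) : map_poly (map_poly (horner_eval c)) gg = hc c.
Proof.
have eu : map_poly (horner_eval c) u2 = UU c.
  by rewrite /u2 /UU rmorphD /= map_polyC map_polyX /= horner_evalE hornerX.
have ep : map_poly (horner_eval c) p2 = PP c.
  by rewrite /p2 /PP rmorphM /= map_polyC map_polyX /= horner_evalE hornerX.
have [m0 m1 m2 m3] := morph_bs (map_poly (horner_eval c)) u2 p2.
rewrite gg_quart map_quart rmorph1 /hc; congr quart.
- by rewrite /a0 -eu -ep; exact: m0.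
- by rewrite /a1 -eu -ep; exact: m1.
- by rewrite /a2 -eu -ep; exact: m2.
- by rewrite /a3 -eu; exact: m3.
Qed.

End Main.


Section Main2.
Variable C : numClosedFieldType.
Local Notation A1 := {poly C}.
Local Notation A2 := {poly A1}.
Local Notation B := {poly A2}.
Local Notation gg := (gg C).
Lemma exists_nonroot (N : A1) : N != 0 -> exists c, ~~ root N c.
Proof.
move=> N0.
set rs := [seq (i%:R : C) | i <- iota 0 (size N)].
have [/hasP [x _ hx]|nh] := boolP (has (fun x => ~~ root N x) rs); first by exists x.
exfalso; move: N0; apply/negP/negPn/eqP.
apply: (@roots_geq_poly_eq0 _ N rs).
- by apply/allP => x xs; apply/negPn; move: nh => /hasPn /(_ x xs).
- by rewrite map_inj_uniq ?iota_uniq // => i j /eqP; rewrite eqr_nat => /eqP.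
- by rewrite size_map size_iota.
Qed.

Lemma size_map_le (R S : nzRingType) (f : {rmorphism R -> S}) (p : {poly R}) :
  (size (map_poly f p) <= size p)%N.
Proof.
by apply/leq_sizeP => j hj; rewrite coef_map nth_default //; exact: rmorph0.
Qed.

Lemma g_prime (p q : B) : (exists m, p * q = m * gg) ->
  (exists m, p = m * gg) \/ (exists m, q = m * gg).
Proof.
have mg : gg \is monic by rewrite gg_quart monicE lead_quart ?oner_neq0.
have sg : size gg = 5%N by rewrite gg_quart size_quart ?oner_neq0.
have g0 : gg != 0 by rewrite -size_poly_eq0 sg.
move=> [m Epq].
have Ep := Pdiv.RingMonic.rdivp_eq mg p.
have Eq := Pdiv.RingMonic.rdivp_eq mg q.
set dp := Pdiv.CommonRing.rdivp p gg in Ep; set rp := Pdiv.CommonRing.rmodp p gg in Ep.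
set dq := Pdiv.CommonRing.rdivp q gg in Eq; set rq := Pdiv.CommonRing.rmodp q gg in Eq.
have srp : (size rp < 5)%N by rewrite -sg; apply: Pdiv.CommonRing.ltn_rmodpN0.
have srq : (size rq < 5)%N by rewrite -sg; apply: Pdiv.CommonRing.ltn_rmodpN0.
have [rp0|rp0] := eqVneq rp 0; first by left; exists dp; rewrite {1}Ep rp0 addr0.
have [rq0|rq0] := eqVneq rq 0; first by right; exists dq; rewrite {1}Eq rq0 addr0.
exfalso.
have Erp : rp = p - dp * gg by rewrite {1}Ep addrC addKr.
have Erq : rq = q - dq * gg by rewrite {1}Eq addrC addKr.
have Er : rp * rq = (m - dp * q - dq * p + dp * dq * gg) * gg.
  have -> : rp * rq = p * q - (dp * q + dq * p - dp * dq * gg) * gg by rewrite Erp Erq; ring.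
  by rewrite Epq; ring.
set Np := lead_coef (lead_coef rp).
set Nq := lead_coef (lead_coef rq).
have Np0 : Np != 0 by rewrite lead_coef_eq0 lead_coef_eq0.
have Nq0 : Nq != 0 by rewrite lead_coef_eq0 lead_coef_eq0.
have [c hc0] := exists_nonroot (mulf_neq0 (mulf_neq0 Np0 Nq0) (negbT (polyX_eq0 _))).
move: hc0; rewrite /root !hornerM hornerX !mulf_eq0 !negb_or => /andP [/andP [Npc Nqc] c0].
pose f := map_poly (horner_eval c) : A2 -> A1.
pose psi := map_poly (map_poly (horner_eval c)) : B -> {poly A1}.
have psiM : forall x y, psi (x * y) = psi x * psi y.
  by move=> x y; rewrite /psi rmorphM.
have E' : psi rp * psi rq = psi (m - dp * q - dq * p + dp * dq * gg) * hc c.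
  by rewrite -psiM Er psiM /psi psi_g.
have vanish : forall r : B, r != 0 -> (size r < 5)%N ->
    (exists m1, psi r = m1 * hc c) -> (lead_coef (lead_coef r)).[c] = 0.
  move=> r r0 sr [m1 Em1].
  have pr0 : psi r = 0.
    have [m10|m10] := eqVneq m1 0; first by rewrite Em1 m10 mul0r.
    have hc0' : hc c != 0 by rewrite -size_poly_eq0 hc_size.
    have := size_map_le (map_poly (horner_eval c)) r.
    rewrite -/(psi r) Em1 size_mul // hc_size => h.
    have : (size m1 != 0)%N by rewrite size_poly_eq0.
    rewrite addnS /= in h; move=> hm; rewrite -lt0n in hm; exfalso.
    have := leq_ltn_trans h sr; rewrite (_ : 5 = 1 + 4)%N // ltn_add2r ltnS leqn0.
    by move=> /eqP e; rewrite e in hm.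
  have := congr1 (fun x : {poly A1} => x`_(size r).-1) pr0.
  rewrite /= coef0 /psi coef_map -lead_coefE /= => h.
  have := congr1 (fun x : A1 => x`_(size (lead_coef r)).-1) h.
  by rewrite /= coef0 coef_map -lead_coefE /=.
have := prime_of_irr (hc_monic c) (hc_irr c0) (ex_intro _ _ E').
case=> [h|h].
- by move: Npc; rewrite /Np (vanish rp rp0 srp h) eqxx.
- by move: Nqc; rewrite /Nq (vanish rq rq0 srq h) eqxx.
Qed.

Lemma memE (p : {poly B}) :
  in_ideal2 (h4sym C 1) (h4sym C 4) p <-> exists m, p.[ss C] = m * gg.
Proof.
rewrite h1E; split.
  move=> [a [b ->]]; exists b.[ss C].
  by rewrite hornerD !hornerM hornerXsubC subrr mulr0 add0r h4E.
move=> [m Em].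
have /factor_theorem [q1 E1] : root (p - (p.[ss C])%:P) (ss C).
  by apply/rootP; rewrite hornerD hornerN hornerC subrr.
have /factor_theorem [q2 E2] : root (h4sym C 4 - gg%:P) (ss C).
  by apply/rootP; rewrite hornerD hornerN hornerC h4E subrr.
exists (q1 - m%:P * q2), m%:P.
have -> : p = (p - (p.[ss C])%:P) + (p.[ss C])%:P by rewrite subrK.
have -> : h4sym C 4 = (h4sym C 4 - gg%:P) + gg%:P by rewrite subrK.
rewrite E1 E2 Em polyCM; ring.
Qed.

End Main2.

Theorem mainTheorem10 (C : numClosedFieldType) :
  prime_ideal (in_ideal2 (h4sym C 1) (h4sym C 4)).
Proof.
have mg : gg C \is monic by rewrite gg_quart monicE lead_quart ?oner_neq0.
have sg : size (gg C) = 5%N by rewrite gg_quart size_quart ?oner_neq0.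
split.
  move/memE => [m]; rewrite hornerC => E.
  have m0 : m != 0 by apply: contra_eq_neq E => ->; rewrite mul0r oner_neq0.
  have g0 : gg C != 0 by rewrite -size_poly_eq0 sg.
  have := congr1 (fun x : {poly {poly {poly C}}} => size x) E; rewrite /= size_poly1 size_mul // sg addnS /=.
  have : (size m != 0)%N by rewrite size_poly_eq0.
  by rewrite -lt0n => hm h; lia.
move=> p q /memE [m]; rewrite hornerM => E.
case: (g_prime (ex_intro _ _ E)) => [[m1 E1]|[m2 E2]].
  by left; apply/memE; exists m1.
by right; apply/memE; exists m2.
Qed.
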